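(* Let $(\Xi,d_\Xi)$ be a metric space, let $\{P^\nu\}_{\nu\in\mathbb{N}}$ be probabilities on $(\Xi,\mathcal{B}(\Xi))$ converging weakly to a probability $P$, and let $\{h^\nu\}_{\nu\in\mathbb{N}}$ be measurable $\overline{\mathbb{R}}$-valued functions on $\Xi$ such that $$\limsup_{K\to+\infty}\ \limsup_{\nu\to+\infty}\mathbb{E}^{P^\nu}\big[h^\nu(\xi)\,\mathbb{1}\{\xi:h^\nu(\xi)\ge K\}\big]=0.$$ Then $$\limsup_{\nu\to+\infty}\mathbb{E}^{P^\nu}\big[h^\nu(\xi)\big]\ \le\ \mathbb{E}^{P}\Big[\limsup_{(\nu,\zeta)\to(+\infty,\xi)}h^\nu(\zeta)\Big].$$
   Context: $\overline{\mathbb{R}}=\mathbb{R}\cup\{-\infty,+\infty\}$; weak convergence means $\int\varphi\,dP^\nu\to\int\varphi\,dP$ for all bounded continuous $\varphi$. For a probability $\mu$ and measurable $\overline{\mathbb{R}}$-valued $g$, $\mathbb{E}^\mu[g]:=\int g_+\,d\mu-\int g_-\,d\mu$ with $g_+=\max\{g,0\}$, $g_-=-\min\{g,0\}$ and conventions $+\infty-\alpha=+\infty$ for all $\alpha\in\overline{\mathbb{R}}$ and $\beta-(+\infty)=-\infty$ for $\beta\in\mathbb{R}$. $\mathbb{1}\{B\}$ is the indicator of $B$. $\limsup_{(\nu,\zeta)\to(+\infty,\xi)}h^\nu(\zeta):=\lim_{\delta\downarrow0}\lim_{N\to\infty}\sup\{h^\nu(\zeta):\nu\ge N,\ d_\Xi(\zeta,\xi)<\delta\}$.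 *)

(* Defs.v *)
From HB Require Import structures.
From mathcomp Require Import all_boot all_order all_algebra.
From mathcomp Require Import all_classical all_reals all_analysis.
From mathcomp Require Import measurable_realfun.
Set Implicit Arguments. Unset Strict Implicit. Unset Printing Implicit Defensive.
Import Order.TTheory GRing.Theory Num.Theory.
Local Open Scope classical_set_scope.
Local Open Scope ring_scope.

Definition is_metric (R : realType) (T : Type) (dist : T -> T -> R) : Prop :=
  [/\ forall x y, 0 <= dist x y,
      forall x y, dist x y = 0 <-> x = y,
      forall x y, dist x y = dist y x &
      forall x y z, dist x z <= dist x y + dist y z].

Definition dopen (R : realType) (T : Type) (dist : T -> T -> R) (A : set T) : Prop :=
  forall x, A x -> exists e : R, 0 < e /\ [set y | dist x y < e] `<=` A.

Definition borel_of_metric (R : realType) (d : measure_display)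
  (T : measurableType d) (dist : T -> T -> R) : Prop :=
  @measurable d T = <<s [set A | dopen dist A] >>.

Definition dcontinuous (R : realType) (T : Type) (dist : T -> T -> R) (f : T -> R) : Prop :=
  forall x (e : R), 0 < e -> exists del : R, 0 < del /\
    forall y, dist x y < del -> `|f y - f x| < e.

Definition bounded_fun_R (R : realType) (T : Type) (f : T -> R) : Prop :=
  exists M : R, forall x, `|f x| <= M.

Definition weak_conv (R : realType) (d : measure_display) (T : measurableType d)
  (dist : T -> T -> R) (Pn : nat -> probability T R) (P : probability T R) : Prop :=
  forall f : T -> R, dcontinuous dist f -> bounded_fun_R f ->
    ((fun n => \int[Pn n]_x (f x)%:E) @ \oo --> \int[P]_x (f x)%:E)%E.

(* E^mu[g] := int g_+ - int g_-, with +oo - a = +oo and b - (+oo) = -oo *)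
Definition Eexp (R : realType) (d : measure_display) (T : measurableType d)
  (mu : probability T R) (g : T -> \bar R) : \bar R :=
  let a := (\int[mu]_x (g^\+ x))%E in
  let b := (\int[mu]_x (g^\- x))%E in
  if a == +oo%E then +oo%E else (a - b)%E.

Definition limsup_pinfty (R : realType) (F : R -> \bar R) : \bar R :=
  ereal_inf [set ereal_sup [set F K | K in [set K | M <= K]] | M in [set: R]].

Definition joint_limsup (R : realType) (T : Type) (dist : T -> T -> R)
  (h : nat -> T -> \bar R) (xi : T) : \bar R :=
  ereal_inf [set ereal_sup [set h nu z | nu in [set nu | (N <= nu)%N] & z in
                                         [set z | dist z xi < delta]]
            | delta in [set delta : R | 0 < delta] & N in [set: nat]].

(* Main.v *)
Require Import Defs.
From HB Require Import structures.
From mathcomp Require Import all_boot all_order all_algebra.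
From mathcomp Require Import all_classical all_reals all_analysis.
From mathcomp Require Import measurable_realfun.
From mathcomp Require Import lra.
Import Order.TTheory GRing.Theory Num.Theory.
Local Open Scope classical_set_scope.
Local Open Scope ring_scope.
Local Open Scope ereal_scope.
Lemma meas_dopen (R : realType) (d : measure_display) (T : measurableType d)
  (dist : T -> T -> R) (f : T -> \bar R) :
  borel_of_metric dist ->
  (forall r : R, dopen dist [set x | (f x < r%:E)%E]) -> measurable_fun setT f.
Proof.
move=> hB hf.
apply: (measurability _ (ErealGenInftyO.measurableE R)) => _ /= -[_ [r ->] <-].
rewrite setTI preimage_itvNyo hB; apply: sub_sigma_algebra; exact: hf.
Qed.
Set Implicit Arguments. Unset Strict Implicit.
Lemma jl_open (R : realType) (T : Type) (dist : T -> T -> R)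
  (h : nat -> T -> \bar R) (r : R) :
  is_metric dist -> dopen dist [set x | joint_limsup dist h x < r%:E].
Proof.
move=> [d0 dE dS dT] x /= /ereal_inf_lt [_ [del del0 [N _ <-]]] Sr.
exists (del / 2)%R; split; first by rewrite divr_gt0.
move=> y /= dxy; rewrite /joint_limsup.
apply: le_lt_trans Sr; apply: le_trans; first apply: ereal_inf_lbound.
  exists (del / 2)%R; first by rewrite /= divr_gt0.
  by exists N.
apply: ereal_sup_le => _ [nu Nnu [z /= zy <-]].
exists nu => //; exists z => //=.
rewrite (le_lt_trans (dT z y x))// [dist y x]dS.
by rewrite [X in (_ < X)%R](splitr del) ltrD.
Qed.
Definition cK (R : realType) (K : R) (m : nat) (t : \bar R) : \bar R :=
  maxe (mine t K%:E) (- (m%:R)%:E).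

Definition Phi (R : realType) (T : Type) (dist : T -> T -> R)
  (h : nat -> T -> \bar R) (K : R) (m : nat) (x : T) : \bar R :=
  ereal_sup [set cK K m (h nu z) - (m%:R * dist x z)%:E
             | nu in [set nu | (m <= nu)%N] & z in [set: T]].

Lemma cK_ge (R : realType) (K : R) m t : (- (m%:R)%:E) <= cK K m t.
Proof. by rewrite /cK le_max lexx orbT. Qed.

Lemma cK_le (R : realType) (K : R) m t : (0 <= K)%R -> cK K m t <= K%:E.
Proof.
move=> K0; rewrite /cK ge_max ge_min lexx orbT /=.
by rewrite lee_fin (le_trans _ K0)// oppr_le0.
Qed.

Lemma cK_fin (R : realType) (K : R) m t : (0 <= K)%R -> cK K m t \is a fin_num.
Proof.
move=> K0; rewrite fin_numElt (lt_le_trans _ (cK_ge K m t)) ?ltNyr//.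
by rewrite (le_lt_trans (cK_le m t K0)) ?ltry.
Qed.

Lemma cK_mono (R : realType) (K : R) m t u : t <= u -> cK K m t <= cK K m u.
Proof.
move=> tu; rewrite /cK ge_max !le_max lexx orbT andbT.
by rewrite le_min !ge_min tu lexx /= orbT.
Qed.

Lemma cK_S (R : realType) (K : R) m t : cK K m.+1 t <= cK K m t.
Proof.
rewrite /cK ge_max le_max lexx /= le_max lee_fin lerN2 ler_nat leqnSn !orbT.
by [].
Qed.

Lemma Phi_ge (R : realType) (T : Type) (dist : T -> T -> R) h K m x :
  is_metric dist -> cK K m (h m x) <= Phi dist h K m x.
Proof.
move=> [d0 dE dS dT]; apply: ereal_sup_ubound.
exists m => //=; exists x => //.
by rewrite (proj2 (dE x x) erefl) mulr0 sube0.
Qed.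

Lemma Phi_ge_nu (R : realType) (T : Type) (dist : T -> T -> R) h K m nu x :
  is_metric dist -> (m <= nu)%N -> cK K m (h nu x) <= Phi dist h K m x.
Proof.
move=> [d0 dE dS dT] mnu; apply: ereal_sup_ubound.
exists nu => //=; exists x => //.
by rewrite (proj2 (dE x x) erefl) mulr0 sube0.
Qed.

Lemma Phi_le (R : realType) (T : Type) (dist : T -> T -> R) h K m x :
  is_metric dist -> (0 <= K)%R -> Phi dist h K m x <= K%:E.
Proof.
move=> [d0 dE dS dT] K0; apply: ge_ereal_sup => _ [nu _ [z _ <-]].
rewrite (le_trans _ (cK_le m (h nu z) K0))// leeBlDr// leeDl// lee_fin.
by rewrite mulr_ge0.
Qed.

Lemma Phi_fin (R : realType) (T : Type) (dist : T -> T -> R) h K m x :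
  is_metric dist -> (0 <= K)%R -> Phi dist h K m x \is a fin_num.
Proof.
move=> dm K0; rewrite fin_numElt (lt_le_trans _ (Phi_ge h K m x dm)).
  by rewrite (le_lt_trans (Phi_le h m x dm K0)) ?ltry.
by rewrite (lt_le_trans _ (cK_ge K m _)) ?ltNyr.
Qed.

Lemma Phi_S (R : realType) (T : Type) (dist : T -> T -> R) h K m x :
  is_metric dist -> Phi dist h K m.+1 x <= Phi dist h K m x.
Proof.
move=> [d0 dE dS dT]; apply: ge_ereal_sup => _ [nu mnu [z _ <-]].
apply: le_trans; last first.
  apply: ereal_sup_ubound; exists nu; first exact: ltnW.
  by exists z.
apply: leeB; first exact: cK_S.
by rewrite lee_fin ler_wpM2r// ler_nat.
Qed.

Lemma Phi_lip (R : realType) (T : Type) (dist : T -> T -> R) h K m x y :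
  is_metric dist -> (0 <= K)%R ->
  Phi dist h K m x <= Phi dist h K m y + (m%:R * dist x y)%:E.
Proof.
move=> [d0 dE dS dT] K0; apply: ge_ereal_sup => _ [nu mnu [z _ <-]].
set c := cK _ _ _; have cf : c \is a fin_num by exact: cK_fin.
rewrite -(fineK cf).
apply: (@le_trans _ _ ((fine c - m%:R * dist y z)%:E + (m%:R * dist x y)%:E)).
  have H : (m%:R * dist y z <= m%:R * dist x y + m%:R * dist x z)%R.
    by rewrite -mulrDr ler_wpM2l// -[dist x y]dS dT.
  rewrite -!EFinB -EFinD lee_fin; lra.
apply: leeD2r; apply: ereal_sup_ubound; exists nu => //; exists z => //.
by rewrite EFinB fineK.
Qed.

Lemma Phi_lim (R : realType) (T : Type) (dist : T -> T -> R) h K x (a : R) :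
  is_metric dist -> (0 <= K)%R ->
  mine (joint_limsup dist h x) K%:E < a%:E ->
  exists m, Phi dist h K m x <= a%:E.
Proof.
move=> dm K0 Ga.
have [Ka|aK] := lerP K a.
  by exists 0%N; rewrite (le_trans (Phi_le h 0 x dm K0))// lee_fin.
have {Ga} : joint_limsup dist h x < a%:E.
  move: Ga; rewrite gt_min => /orP [//|]; rewrite lte_fin => /(lt_trans aK).
  by rewrite ltxx.
move=> /ereal_inf_lt [_ [del del0 [N _ <-]]] Sa.
rewrite /= in del0.
set M := Num.bound ((K - a) / del + `|a|)%R.
have hM : ((K - a) / del + `|a| < M%:R)%R by apply: archi_boundP;
  rewrite addr_ge0// divr_ge0// ?subr_ge0 ltW.
have Ka0 : (0 <= (K - a) / del)%R by rewrite divr_ge0// ?subr_ge0 ltW.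
exists (N + M)%N.
move: dm => [d0 dE dS dT].
apply: ge_ereal_sup => _ [nu mnu [z _ <-]].
rewrite /= in mnu.
have Mm : (M%:R <= (N + M)%:R :> R)%R by rewrite ler_nat leq_addl.
have [zx|zx] := ltP (dist z x) del.
  have hz : h nu z < a%:E.
    apply: le_lt_trans Sa; apply: ereal_sup_ubound; exists nu => /=.
      exact: leq_trans (leq_addr _ _) mnu.
    by exists z.
  rewrite leeBlDr// (le_trans _ (leeDl _ _)) ?lee_fin ?mulr_ge0//.
  rewrite /cK ge_max ge_min (ltW hz) /= lee_fin lerNl.
  apply: le_trans Mm; apply: le_trans (ltW hM).
  by rewrite (le_trans (ler_norm (- a)))// normrN lerDr.
rewrite (le_trans (leeB (cK_le (N + M) (h nu z) K0) (lexx _)))// -EFinB lee_fin.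
rewrite lerBlDl -lerBlDr.
have : ((K - a) <= M%:R * del)%R.
  rewrite -ler_pdivrMr//; apply: le_trans (ltW hM); rewrite lerDl//.
move=> H1; apply: le_trans H1 _; rewrite dS.
by apply: ler_pM => //; rewrite ltW.
Qed.

Lemma phi_lip (R : realType) (T : Type) (dist : T -> T -> R) h K m x y :
  is_metric dist -> (0 <= K)%R ->
  (fine (Phi dist h K m x) <= fine (Phi dist h K m y) + m%:R * dist x y)%R.
Proof.
move=> dm K0; rewrite -lee_fin EFinD !fineK ?Phi_fin//; exact: Phi_lip.
Qed.

Lemma phi_dcont (R : realType) (T : Type) (dist : T -> T -> R) h K m :
  is_metric dist -> (0 <= K)%R ->
  dcontinuous dist (fun x => fine (Phi dist h K m x)).
Proof.
move=> dm K0 x e e0; have dm' := dm; move: dm' => [d0 dE dS dT].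
have m1 : (0 < m%:R + 1 :> R)%R by rewrite ltr_wpDl.
exists (e / (m%:R + 1))%R; split; first by rewrite divr_gt0.
move=> y dxy.
have H : (m%:R * dist x y < e)%R.
  apply: (@le_lt_trans _ _ ((m%:R + 1) * dist x y)%R).
    by rewrite ler_wpM2r// lerDl.
  by rewrite mulrC -ltr_pdivlMr.
have H1 := phi_lip h m x y dm K0.
have H2 := phi_lip h m y x dm K0.
rewrite dS in H2.
rewrite ltr_norml; apply/andP; split; lra.
Qed.

Lemma phi_bnd (R : realType) (T : Type) (dist : T -> T -> R) h K m :
  is_metric dist -> (0 <= K)%R ->
  bounded_fun_R (fun x => fine (Phi dist h K m x)).
Proof.
move=> dm K0; exists (K + m%:R)%R => x.
have H1 := Phi_le h m x dm K0.
have H2 := le_trans (cK_ge K m (h m x)) (Phi_ge h K m x dm).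
rewrite -(fineK (Phi_fin h m x dm K0)) lee_fin in H1.
rewrite -(fineK (Phi_fin h m x dm K0)) lee_fin in H2.
have m0 : (0 <= m%:R :> R)%R by [].
rewrite ler_norml; apply/andP; split; lra.
Qed.

Lemma Phi_meas (R : realType) (d : measure_display) (T : measurableType d)
  (dist : T -> T -> R) h K m :
  is_metric dist -> (0 <= K)%R -> borel_of_metric dist ->
  measurable_fun setT (Phi dist h K m).
Proof.
move=> dm K0 hB; apply: (@meas_dopen R d T dist _ hB) => r x /= Hx.
have m1 : (0 < m%:R + 1 :> R)%R by rewrite ltr_wpDl.
rewrite -(fineK (Phi_fin h m x dm K0)) lte_fin in Hx.
exists ((r - fine (Phi dist h K m x)) / (m%:R + 1))%R; split.
  by rewrite divr_gt0// subr_gt0.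
move=> y /= dxy.
rewrite -(fineK (Phi_fin h m y dm K0)) lte_fin.
have H : (m%:R * dist x y < r - fine (Phi dist h K m x))%R.
  apply: (@le_lt_trans _ _ ((m%:R + 1) * dist x y)%R).
    by rewrite ler_wpM2r// ?lerDl//; case: dm.
  by rewrite mulrC -ltr_pdivlMr.
have H2 := phi_lip h m y x dm K0.
move: dm => [d0 dE dS dT]; rewrite dS in H2.
lra.
Qed.
Lemma real_pt (R : realType) (t p s : R) : (t <= p + s)%R -> (0 <= s)%R ->
  (Num.max t 0 + Num.max (- p) 0 <= Num.max p 0 + s + Num.max (- t) 0)%R.
Proof.
move=> tps s0.
have [t0|t0] := lerP 0 t; have [p0|p0] := lerP 0 p;
  have [t1|t1] := lerP 0 (-t); have [p1|p1] := lerP 0 (-p); lra.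
Qed.

Lemma ereal_pt (R : realType) (t s : \bar R) (p : R) : t <= p%:E + s -> 0 <= s ->
  maxe t 0 + maxe (- p%:E) 0 <= maxe p%:E 0 + s + maxe (- t) 0.
Proof.
move: t s => [t| |] [s| |] //= tps s0.
- rewrite -?EFinN -!EFin_max -!EFinD lee_fin; apply: real_pt.
    by rewrite -lee_fin EFinD.
  by rewrite -lee_fin.
- by rewrite -?EFinN -!EFin_max addey// addye// leey.
- rewrite (max_l (leey 0)) (max_r (leNye 0)).
  by rewrite -!EFin_max addey// adde0 leey.
- rewrite (max_l (leey 0)) (max_r (leNye 0)).
  by rewrite -!EFin_max -EFinD addey// leey.
- rewrite (max_l (leey 0)) (max_r (leNye 0)).
  by rewrite -!EFin_max -EFinD (@addey _ (Num.max p 0)%:E)// addey// leey.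
Qed.

Lemma int_fin (R : realType) (d : measure_display) (T : measurableType d)
  (mu : probability T R) (g : T -> \bar R) (C : R) :
  measurable_fun setT g -> (forall x, 0 <= g x) -> (forall x, g x <= C%:E) ->
  \int[mu]_x g x \is a fin_num.
Proof.
move=> mg g0 gC.
rewrite ge0_fin_numE; last by apply: integral_ge0 => x _.
apply: (@le_lt_trans _ _ (\int[mu]_x (cst C%:E x))).
  apply: ge0_le_integral => //; exact: measurable_cst.
rewrite integral_cst// [X in _ * X](_ : _ = 1) ?mule1 ?ltry//; exact: probability_setT.
Qed.

Lemma Eexp_le (R : realType) (d : measure_display) (T : measurableType d)
  (mu : probability T R) (f Ph v : T -> \bar R) (C : R) :
  measurable_fun setT f -> measurable_fun setT Ph -> measurable_fun setT v ->
  (0 <= C)%R -> (forall x, Ph x <= C%:E) -> (forall x, - C%:E <= Ph x) ->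
  (forall x, 0 <= v x) -> (forall x, f x <= Ph x + v x) ->
  Eexp mu f <= \int[mu]_x Ph x + \int[mu]_x v x.
Proof.
move=> mf mP mv C0 PC CP v0 fPv.
have Pfin x : Ph x \is a fin_num.
  rewrite fin_numElt (lt_le_trans _ (CP x)) ?ltNyr//.
  by rewrite (le_lt_trans (PC x)) ?ltry.
have ipf : \int[mu]_x Ph^\+ x \is a fin_num.
  apply: (@int_fin _ _ _ _ _ C) => //; first exact: measurable_funepos.
  by move=> x; rewrite funeposE ge_max PC lee_fin C0.
have imf : \int[mu]_x Ph^\- x \is a fin_num.
  apply: (@int_fin _ _ _ _ _ C) => //; first exact: measurable_funeneg.
  by move=> x; rewrite funenegE ge_max lee_fin C0 andbT leeNl.
have V0 : 0 <= \int[mu]_x v x by apply: integral_ge0 => x _.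
have b0 : 0 <= \int[mu]_x f^\- x by apply: integral_ge0 => x _.
have a0 : 0 <= \int[mu]_x f^\+ x by apply: integral_ge0 => x _.
rewrite (integralE _ _ Ph) /Eexp /=.
case: ifPn => [/eqP ainf|ainf].
  have : \int[mu]_x f^\+ x <= \int[mu]_x (Ph^\+ x + v x).
    apply: ge0_le_integral => //.
    - exact: measurable_funepos.
    - by apply: emeasurable_funD => //; exact: measurable_funepos.
    move=> x _; rewrite !funeposE ge_max adde_ge0// ?le_max ?lexx ?orbT// andbT.
    by rewrite (le_trans (fPv x))// leeD2r// le_max lexx.
  rewrite ge0_integralD//; last exact: measurable_funepos.
  rewrite ainf leye_eq.
  have [Vinf|Vfin] := eqVneq (\int[mu]_x v x) +oo.
    by rewrite Vinf -(fineK ipf) -(fineK imf) -EFinB addey// leey.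
  have Vf : \int[mu]_x v x \is a fin_num by rewrite ge0_fin_numE// ltey.
  by rewrite -(fineK ipf) -(fineK Vf) -EFinD.
have af : \int[mu]_x f^\+ x \is a fin_num by rewrite ge0_fin_numE// ltey.
have mfp := measurable_funepos mf; have mfn := measurable_funeneg mf.
have mPp := measurable_funepos mP; have mPn := measurable_funeneg mP.
have m1 : measurable_fun setT (fun x => f^\+ x + Ph^\- x).
  exact: emeasurable_funD.
have m2 : measurable_fun setT (fun x => Ph^\+ x + v x).
  exact: emeasurable_funD.
have m3 : measurable_fun setT (fun x => Ph^\+ x + v x + f^\- x).
  exact: emeasurable_funD.
have H : \int[mu]_x (f^\+ x + Ph^\- x) <= \int[mu]_x (Ph^\+ x + v x + f^\- x).
  apply: ge0_le_integral => //; first by move=> x _; rewrite adde_ge0.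
  move=> x _; rewrite !funeposE !funenegE -(fineK (Pfin x)); apply: ereal_pt => //.
  by rewrite fineK.
move: H; rewrite ge0_integralD// ge0_integralD//; last by move=> x _; rewrite adde_ge0.
rewrite ge0_integralD//.
move: V0 b0 af ipf imf.
set V := \int[mu]_x v x; set b := \int[mu]_x f^\- x.
set a := \int[mu]_x f^\+ x; set ip := \int[mu]_x Ph^\+ x.
set im := \int[mu]_x Ph^\- x.
move: a ip im V b => [a| |] [ip| |] [im| |] // [V| |] [b| |] //.
- move=> _ _ _ _ _; rewrite -!EFinD lee_fin => H.
  have HH : ((a - b)%R%:E <= (ip - im + V)%R%:E) by rewrite lee_fin; lra.
  by rewrite !EFinD !EFinN in HH.
- by rewrite leNye.
- by move=> *; rewrite addey// leey.
Qed.
Lemma limsup_add (R : realType) (u b c : nat -> \bar R) (be : R) (m : nat) :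
  (forall n, (m <= n)%N -> u n <= b n + c n) -> b @ \oo --> be%:E ->
  limn_esup u <= be%:E + limn_esup c.
Proof.
move=> ubc cb; apply/lee_addgt0Pr => e e0.
have : \forall n \near \oo, b n < (be + e)%:E.
  by apply: (cb [set y | y < (be + e)%:E]); apply: open_ereal_lt'; rewrite lte_fin ltrDl.
move=> [N _ HN].
rewrite !limn_esup_lim.
have cg : (fun n => (be + e)%:E + esups c n) @ \oo --> (be + e)%:E + limn (esups c).
  apply: cvgeD; [exact: fin_num_adde_defr|exact: cvg_cst|].
  have := @is_cvg_esups R c. exact. 
apply: le_trans.
  apply: (lee_lim (f := esups u) (g := fun n => ((be + e)%:E + esups c n)%E)).
  - have := @is_cvg_esups R u; exact.
  - by apply/cvg_ex; eexists; exact: cg.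
  exists (maxn m N) => // n /= mNn.
  apply: ge_ereal_sup => _ [k /= nk <-].
  have mk : (m <= k)%N by apply: leq_trans (leq_maxl m N) (leq_trans mNn nk).
  have Nk : (N <= k)%N by apply: leq_trans (leq_maxr m N) (leq_trans mNn nk).
  apply: le_trans (ubc k mk) _.
  apply: leeD; first exact/ltW/HN.
  by apply: ereal_sup_ubound; exists k.
by rewrite (cvg_lim _ cg)// EFinD addeAC.
Qed.

Lemma bnd_integrable (R : realType) (d : measure_display) (T : measurableType d)
  (mu : probability T R) (g : T -> \bar R) (C : R) :
  measurable_fun setT g -> (forall x, - C%:E <= g x <= C%:E) ->
  mu.-integrable setT g.
Proof.
move=> mg gC; apply/integrableP; split => //.
apply: (@le_lt_trans _ _ (\int[mu]_x (cst C%:E x))).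
  apply: ge0_le_integral => //.
  - exact: (measurableT_comp (@abse_measurable R setT) mg).
  move=> x _ /=; have /andP[g1 g2] := gC x.
  have gf : g x \is a fin_num.
    rewrite fin_numElt (lt_le_trans _ g1) ?ltNyr//.
    by rewrite (le_lt_trans g2) ?ltry.
  move: g1 g2; rewrite -(fineK gf) abse_EFin !lee_fin => g1 g2.
  by rewrite ler_norml g1 g2.
rewrite integral_cst// [X in _ * X](_ : _ = 1) ?mule1 ?ltry//.
exact: probability_setT.
Qed.

Lemma val_pt (R : realType) (K : R) (t : \bar R) : (0 <= K)%R ->
  K%:E + maxe (- t) 0 <= (K%:E - mine t K%:E) + maxe t 0.
Proof.
move=> K0; case: t => [g| |].
- rewrite -EFinN -!EFin_min -!EFin_max -EFinN -!EFinD lee_fin.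
  have [g0|g0] := lerP 0 g; have [gK|gK] := lerP g K;
  have [g1|g1] := lerP 0 (-g); lra.
- rewrite (max_l (leey 0)) (min_r (leey _)) (max_r (leNye 0)).
  by rewrite -EFinB addey// leey.
- rewrite (max_r (leNye 0)) (min_l (leNye _)).
  rewrite [X in _ <= X](_ : _ = +oo) ?leey//.
Qed.

Lemma int_Phi_lim (R : realType) (d : measure_display) (T : measurableType d)
  (dist : T -> T -> R) (P : probability T R) (h : nat -> T -> \bar R) (K : R) :
  is_metric dist -> borel_of_metric dist -> (0 <= K)%R ->
  exists2 L, (fun m => \int[P]_x Phi dist h K m x) @ \oo --> L &
    L <= Eexp P (joint_limsup dist h).
Proof.
move=> dm hB K0.
set G := joint_limsup dist h.
have mG : measurable_fun setT G.
  by apply: (@meas_dopen R d T dist _ hB) => r; exact: jl_open.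
have mPhi m : measurable_fun setT (Phi dist h K m) by exact: Phi_meas.
pose g m x := K%:E - Phi dist h K m x.
have mg m : measurable_fun setT (g m).
  by apply: emeasurable_funB => //; exact: measurable_cst.
have g0 m x : 0 <= g m x.
  by rewrite /g sube_ge0 ?Phi_le// orbC ?Phi_fin.
have ndg x : {homo g^~ x : n m / (n <= m)%N >-> n <= m}.
  apply: (proj1 (@nondecreasing_seqP _ _ (g^~ x))) => n; rewrite /g; apply: leeB => //.
  exact: Phi_S.
pose gl x := limn (g^~ x).
have cg := @cvg_monotone_convergence _ _ _ P _ measurableT g
  (fun m => mg m) (fun m x _ => g0 m x) (fun x _ => ndg x).
have intg m : \int[P]_x Phi dist h K m x = K%:E - \int[P]_x g m x.
  have iP : P.-integrable setT (Phi dist h K m).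
    apply: (@bnd_integrable _ _ _ _ _ (K + m%:R)) => // x.
    rewrite (le_trans (Phi_le h m x dm K0)) ?lee_fin ?lerDl// andbT.
    apply: le_trans (le_trans (cK_ge K m (h m x)) (Phi_ge h K m x dm)).
    by rewrite lee_fin lerN2 lerDr.
  have iK : P.-integrable setT (cst K%:E).
    apply: (@bnd_integrable _ _ _ _ _ K) => // x.
    by rewrite /= lexx andbT lee_fin lerNl (le_trans _ K0)// oppr_le0.
  rewrite /g integralB// integral_cst// [X in _ * X](_ : _ = 1) ?mule1;
    last exact: probability_setT.
  have Pf : \int[P]_x Phi dist h K m x \is a fin_num.
    by apply: integrable_fin_num.
  by rewrite oppeB ?addeA ?subee ?add0e// fin_num_adde_defl.
exists (K%:E - \int[P]_x gl x).
  rewrite (_ : (fun m => _) = (fun m => K%:E - \int[P]_x g m x)); last first.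
    by apply/funext => m; rewrite intg.
  apply: cvgeB; [exact: fin_num_adde_defr|exact: cvg_cst|exact: cg].
have cgl x : g^~ x @ \oo --> gl x by exact: ereal_nondecreasing_is_cvgn.
have mgl : measurable_fun setT gl.
  by apply: (emeasurable_fun_cvg g) => // x _; exact: cgl.
pose q x := K%:E - mine (G x) K%:E.
have mq : measurable_fun setT q.
  by apply: emeasurable_funB => //; apply: measurable_mine.
have q0 x : 0 <= q x.
  by rewrite /q sube_ge0 ?orbT// ge_min lexx orbT.
have qgl x : q x <= gl x.
  have -> : gl x = ereal_sup (range (g^~ x)).
    by apply: cvg_lim => //; exact: ereal_nondecreasing_cvgn.
  set s := ereal_sup _.
  have gs m : g m x <= s by apply: ereal_sup_ubound; exists m.
  have s0 : 0 <= s by apply: le_trans (g0 0%N x) (gs 0%N).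
  apply/lee_addgt0Pr => e e0.
  have [->|sinf] := eqVneq s +oo; first by rewrite addye// leey.
  have sf : s \is a fin_num by rewrite ge0_fin_numE// ltey.
  have sE : s = (fine s)%:E by rewrite fineK.
  move: (fine s) sE => r sE.
  have [lt|ge] := ltP (mine (G x) K%:E) ((K - r - e)%R%:E).
    have [m Hm] := Phi_lim dm K0 lt.
    have := gs m; rewrite /g.
    move: Hm; rewrite -(fineK (Phi_fin h m x dm K0)) sE.
    rewrite lee_fin => Hm.
    rewrite -EFinB lee_fin => H; exfalso; lra.
  have mf : mine (G x) K%:E \is a fin_num.
    rewrite fin_numElt (lt_le_trans _ ge) ?ltNyr//.
    by rewrite (@le_lt_trans _ _ K%:E) ?ltry// ge_min lexx orbT.
  move: ge; rewrite /q -(fineK mf) sE lee_fin => ge.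
  by rewrite -EFinB -EFinD lee_fin; lra.
have Iqgl : \int[P]_x q x <= \int[P]_x gl x.
  by apply: ge0_le_integral.
apply: (@le_trans _ _ (K%:E - \int[P]_x q x)); first exact: leeB.
have mGp := measurable_funepos mG; have mGn := measurable_funeneg mG.
have pt x : K%:E + G^\- x <= q x + G^\+ x.
  by rewrite funenegE funeposE; exact: val_pt.
have H : \int[P]_x (K%:E + G^\- x) <= \int[P]_x (q x + G^\+ x).
  apply: ge0_le_integral => //. all: try (by move=> x _; rewrite adde_ge0// lee_fin).
  by apply: emeasurable_funD => //; try exact: measurable_cst.
  by apply: emeasurable_funD.
have IK : \int[P]_x K%:E = K%:E.
  rewrite (@integral_cst _ _ _ P setT measurableT K%:E).
  by rewrite [X in _ * X](_ : _ = 1) ?mule1//; exact: probability_setT.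
have mK : measurable_fun setT (fun _ : T => K%:E) by exact: measurable_cst.
have K0' : forall x : T, setT x -> 0 <= K%:E by move=> *; rewrite lee_fin.
move: H; rewrite ge0_integralD// ge0_integralD// IK.
have Q0 : 0 <= \int[P]_x q x by apply: integral_ge0 => x _; exact: q0.
have B0 : 0 <= \int[P]_x G^\- x by apply: integral_ge0 => x _.
have A0 : 0 <= \int[P]_x G^\+ x by apply: integral_ge0 => x _.
rewrite /Eexp /=; case: ifPn => [_|]; first by rewrite leey.
move: Q0 B0 A0.
set Q := \int[P]_x q x; set Bn := \int[P]_x G^\- x; set A := \int[P]_x G^\+ x.
move: Q Bn A => [Q| |] [Bn| |] [A| |] //.
- move=> _ _ _ _; rewrite -!EFinD lee_fin => H.
  have HH : ((K - Q)%R%:E <= (A - Bn)%R%:E) by rewrite lee_fin; lra.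
  by rewrite !EFinD !EFinN in HH.
all: by move=> *; rewrite ?[X in X <= _](_ : _ = -oo) ?leNye.
Qed.

Lemma Eexp_ge0 (R : realType) (d : measure_display) (T : measurableType d)
  (mu : probability T R) (v : T -> \bar R) :
  (forall x, 0 <= v x) -> Eexp mu v = \int[mu]_x v x.
Proof.
move=> v0; rewrite /Eexp /=.
have -> : \int[mu]_x v^\+ x = \int[mu]_x v x.
  by apply: eq_integral => x _; rewrite funeposE (max_l (v0 x)).
have -> : \int[mu]_x v^\- x = 0.
  rewrite (eq_integral (cst 0)) ?integral0// => x _.
  by rewrite funenegE /= (max_r _)// leeNl oppe0.
by case: ifPn => [/eqP ->|_]; rewrite ?sube0.
Qed.

Lemma per_K (R : realType) (d : measure_display) (T : measurableType d)
  (dist : T -> T -> R) (Pn : nat -> probability T R) (P : probability T R)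
  (h : nat -> T -> \bar R) (K be : R) :
  is_metric dist -> borel_of_metric dist -> weak_conv dist Pn P ->
  (forall n, measurable_fun [set: T] (h n : T -> \bar R)) -> (0 <= K)%R ->
  limn_esup (fun n =>
      Eexp (Pn n) (fun x => (h n x * (\1_[set y | (K%:E <= h n y)%E] x)%:E)%E))
    <= be%:E ->
  limn_esup (fun n => Eexp (Pn n) (h n)) <= Eexp P (joint_limsup dist h) + be%:E.
Proof.
move=> dm hB hw hm K0 hbe.
have [L cL LE] := int_Phi_lim P h dm hB K0.
set v := fun n x => (h n x * (\1_[set y | (K%:E <= h n y)%E] x)%:E)%E.
have v0 n x : 0 <= v n x.
  rewrite /v indicE; case: (boolP (x \in _)) => [|_]; last by rewrite mule0.
  by rewrite inE /= => Kh; rewrite mule1 (le_trans _ Kh)// lee_fin.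
have mv n : measurable_fun setT (v n).
  apply: emeasurable_funM => //.
  apply/measurable_EFinP; apply: measurable_indic.
  by rewrite -[X in measurable X]setTI; exact: emeasurable_fun_c_infty.
have step m : limn_esup (fun n => Eexp (Pn n) (h n)) <=
    \int[P]_x Phi dist h K m x + be%:E.
  have mPhi : measurable_fun setT (Phi dist h K m) by exact: Phi_meas.
  have Pb x : Phi dist h K m x <= (K + m%:R)%:E.
    by rewrite (le_trans (Phi_le h m x dm K0)) ?lee_fin ?lerDl.
  have bP x : - (K + m%:R)%:E <= Phi dist h K m x.
    apply: le_trans (le_trans (cK_ge K m (h m x)) (Phi_ge h K m x dm)).
    by rewrite lee_fin lerN2 lerDr.
  have ifin : \int[P]_x Phi dist h K m x \is a fin_num.
    apply: integrable_fin_num => //.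
    by apply: (@bnd_integrable _ _ _ _ _ (K + m%:R)) => // x; rewrite Pb bP.
  rewrite -(fineK ifin).
  apply: le_trans; last by apply: leeD2l; exact: hbe.
  apply: (@limsup_add _ _ (fun n => \int[Pn n]_x Phi dist h K m x) _ _ m).
    move=> n mn.
    have -> : Eexp (Pn n) (fun x => (h n x * (\1_[set y | (K%:E <= h n y)%E] x)%:E)%E) = \int[Pn n]_x v n x by apply: Eexp_ge0; exact: (v0 n).
    apply: (@Eexp_le _ _ _ _ _ _ _ (K + m%:R)) => //.
    - by rewrite addr_ge0.
    - move=> x; rewrite /v indicE; case: (boolP (x \in _)) => [|].
        rewrite inE /= => Kh; rewrite mule1 leeDr//.
        apply: (le_trans _ (Phi_ge_nu h K x dm mn)).
        apply: (@le_trans _ _ K%:E); first by rewrite lee_fin.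
        by rewrite /cK le_max le_min Kh lexx.
      rewrite notin_setE /= => /negP; rewrite -ltNge => hK; rewrite mule0 adde0.
      apply: (le_trans _ (Phi_ge_nu h K x dm mn)).
      by rewrite /cK le_max le_min lexx (ltW hK).
  have e1 (mu : measure T R) :
      \int[mu]_x (fine (Phi dist h K m x))%:E = \int[mu]_x Phi dist h K m x.
    by apply: eq_integral => x _; rewrite fineK// Phi_fin.
  have := hw _ (phi_dcont h m dm K0) (phi_bnd h m dm K0).
  rewrite e1 fineK//.
  by under eq_fun do rewrite e1.
have cs : (fun m => \int[P]_x Phi dist h K m x + be%:E) @ \oo --> L + be%:E.
  apply: cvgeD; [exact: fin_num_adde_defl|exact: cL|exact: cvg_cst].
apply: le_trans (leeD2r _ LE).
rewrite -(cvg_lim _ cs)//.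
apply: lime_ge; first by apply/cvg_ex; eexists; exact: cs.
exact: nearW.
Qed.

Unset Implicit Arguments. Set Strict Implicit.
Local Close Scope ereal_scope.

Theorem corollary3p6 (R : realType) (d : measure_display) (T : measurableType d)
  (dist : T -> T -> R) (Pn : nat -> probability T R) (P : probability T R)
  (h : nat -> T -> \bar R) :
  is_metric dist ->
  borel_of_metric dist ->
  weak_conv dist Pn P ->
  (forall n, measurable_fun [set: T] (h n : T -> \bar R)) ->
  limsup_pinfty (fun K : R => limn_esup (fun n =>
      Eexp (Pn n) (fun x => (h n x * (\1_[set y | (K%:E <= h n y)%E] x)%:E)%E))) = 0%E ->
  (limn_esup (fun n => Eexp (Pn n) (h n)) <= Eexp P (joint_limsup dist h))%E.
Proof.
move=> dm hB hw hm hyp.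
apply/lee_addgt0Pr => e e0.
have : (limsup_pinfty (fun K : R => limn_esup (fun n =>
      Eexp (Pn n) (fun x => (h n x * (\1_[set y | (K%:E <= h n y)%E] x)%:E)%E)))
      < e%:E)%E by rewrite hyp lte_fin.
move=> /ereal_inf_lt [_ [M _ <-]] HM.
apply: (per_K dm hB hw hm (K := Num.max M 0)); first by rewrite le_max lexx orbT.
apply: ltW; apply: le_lt_trans HM.
apply: ereal_sup_ubound; exists (Num.max M 0) => //=.
by rewrite le_max lexx.
Qed.
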